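(* A parking function $(T,p)$ on a rooted tree $T$ with vertex set $[n]$ is prime if and only if every edge of $T$ is used by $p$.
   Context: $T$ is a rooted tree on vertex set $[n]$ with edges oriented towards the root. For $p\in[n]^n$, drivers $1,\dots,n$ arrive in order; driver $i$ parks at $p_i$ if unoccupied, otherwise follows the directed path towards the root and parks at the first unoccupied vertex, leaving if none exists. $(T,p)$ is a parking function if all drivers park. $T_v$ denotes the set of vertices $w$ with a directed path from $w$ to $v$ (including $v$). A parking function is prime if $|T_v|<|\{i:p_i\in T_v\}|$ for every non-root vertex $v$. An edge is used by $p$ if some driver, after failing to park at her preferred vertex, crosses it during her search for an unoccupied vertex. *)

(* Defs.v *)
From mathcomp Require Import all_boot.
Set Implicit Arguments. Unset Strict Implicit. Unset Printing Implicit Defensive.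

(* A rooted tree with edges oriented
   towards the root r is given by a parent map par : 'I_n -> 'I_n; the edges
   are v -> par v for v != r.  The tree condition: every vertex reaches the
   root by iterating par (n iterations suffice), which forces par r = r and
   acyclicity. *)
Definition is_rooted_tree (n : nat) (par : 'I_n -> 'I_n) (r : 'I_n) : Prop :=
  forall v : 'I_n, iter n par v = r.

(* The directed path from v to the root (with the root possibly repeated). *)
Definition root_path n (par : 'I_n -> 'I_n) (v : 'I_n) : seq 'I_n :=
  traject par v n.

(* State of the parking process: occupied vertices, used edges (an edge
   v -> par v is identified with its tail v), and whether every driver so far
   has parked. *)
Record pstate (n : nat) := PState {
  occ : {set 'I_n}; used : {set 'I_n}; allparked : bool }.

(* One driver with preferred vertex v arrives. She walks along the path
   v, par v, ..., r and parks at the first unoccupied vertex (index k); the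
   edges she crosses are those leaving the vertices strictly before index k
   (non-root).  If no vertex is free, she crosses all edges to the root and
   leaves. *)
Definition park_step n (par : 'I_n -> 'I_n) (r : 'I_n) (st : pstate n)
    (v : 'I_n) : pstate n :=
  let s := root_path par v in
  let k := find (fun w => w \notin occ st) s in
  let crossed := [set u in take k s | u != r] in
  if k < size s then
    PState (nth v s k |: occ st) (used st :|: crossed) (allparked st)
  else PState (occ st) (used st :|: crossed) false.

Definition run_parking n (par : 'I_n -> 'I_n) (r : 'I_n) (p : 'I_n -> 'I_n)
    : pstate n :=
  foldl (park_step par r) (PState set0 set0 true) [seq p i | i <- enum 'I_n].

Definition is_parking_function n (par : 'I_n -> 'I_n) (r : 'I_n)
    (p : 'I_n -> 'I_n) : Prop :=
  allparked (run_parking par r p).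

Definition subtree n (par : 'I_n -> 'I_n) (v : 'I_n) : {set 'I_n} :=
  [set w | [exists k : 'I_n, iter k par w == v]].

Definition is_prime_pf n (par : 'I_n -> 'I_n) (r : 'I_n) (p : 'I_n -> 'I_n)
    : Prop :=
  forall v : 'I_n, v != r ->
    #|subtree par v| < #|[set i : 'I_n | p i \in subtree par v]|.

Definition all_edges_used n (par : 'I_n -> 'I_n) (r : 'I_n) (p : 'I_n -> 'I_n)
    : Prop :=
  forall v : 'I_n, v != r -> v \in used (run_parking par r p).

(* Main.v *)
Require Import Defs.
From mathcomp Require Import all_boot.
From mathcomp Require Import zify.

Set Implicit Arguments. Unset Strict Implicit. Unset Printing Implicit Defensive.

Lemma cnt_ord n (P : pred 'I_n) : count P (enum 'I_n) = #|[set i | P i]|.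
Proof. rewrite enumT cardsE cardE /enum_mem size_filter. done. Qed.

Lemma par_r n (par : 'I_n -> 'I_n) r : is_rooted_tree par r -> par r = r.
Proof. move=> Ht. by rewrite -{1}(Ht r) -iterS iterSr Ht. Qed.

Lemma iter_r n (par : 'I_n -> 'I_n) r k : is_rooted_tree par r -> iter k par r = r.
Proof. move=> Ht; elim: k => // k IH; by rewrite iterS IH (par_r Ht). Qed.

Lemma iter_big n (par : 'I_n -> 'I_n) r w K :
  is_rooted_tree par r -> n <= K -> iter K par w = r.
Proof. move=> Ht hK; by rewrite -(subnK hK) iterD Ht (iter_r _ Ht). Qed.

Lemma depth n (par : 'I_n -> 'I_n) r v w K :
  is_rooted_tree par r -> v != r -> iter K par w = v -> K < n.
Proof.
move=> Ht hv hK; rewrite ltnNge; apply/negP => hn; move: hv.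
by rewrite -hK (iter_big _ Ht hn) eqxx.
Qed.

Lemma iter_mulK T (f : T -> T) v K m : iter K f v = v -> iter (m * K) f v = v.
Proof. move=> h; elim: m => // m IH; by rewrite mulSn iterD IH h. Qed.

Lemma nocycle n (par : 'I_n -> 'I_n) r v K :
  is_rooted_tree par r -> v != r -> iter K par v = v -> K = 0.
Proof.
move=> Ht hv; case: K => // K h.
have := iter_mulK n h.
rewrite (iter_big _ Ht) ?leq_pmulr // => hr.
by rewrite hr eqxx in hv.
Qed.

Lemma mem_subtree n (par : 'I_n -> 'I_n) r v w :
  is_rooted_tree par r -> v != r ->
  (w \in subtree par v) <-> exists K, iter K par w = v.
Proof.
move=> Ht hv; rewrite inE; split.
  by move/existsP=> [k /eqP hk]; exists k.
move=> [K hK]; apply/existsP; exists (Ordinal (depth Ht hv hK)); exact/eqP.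
Qed.

Lemma step_inv n (par : 'I_n -> 'I_n) r v st u :
  is_rooted_tree par r -> v != r ->
  exists b : bool,
    #|occ (park_step par r st u) :&: subtree par v| + b
      = #|occ st :&: subtree par v| + (u \in subtree par v)
    /\ (v \in used (park_step par r st u)) = (v \in used st) || b.
Proof.
move=> Ht hv.
set T := subtree par v.
have HT : forall w, w \in T <-> exists K, iter K par w = v.
  by move=> w; exact: mem_subtree.
have vT : v \in T by apply/HT; exists 0.
rewrite /park_step /root_path.
set s := traject par u n.
set k := find _ s.
have Hs : size s = n by rewrite size_traject.
have Hnth : forall i, i < n -> nth u s i = iter i par u.
  by move=> i hi; rewrite nth_traject.
have wnot : k < size s -> nth u s k \notin occ st.
  move=> hk.
  have := @nth_find _ u (fun w => w \notin occ st) s; apply.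
  by rewrite has_find.
case: (boolP (u \in T)) => hu; last first.
  have notT : forall x, x \in s -> x \notin T.
    move=> x /trajectP [i _ ->]. apply/negP => /HT [K hK].
    move/negP: hu; apply; apply/HT; exists (K + i); by rewrite iterD.
  exists false; rewrite addn0 orbF.
  have hcr : (v \in [set u0 in take k s | u0 != r]) = false.
    rewrite inE; apply/negP => /andP [/mem_take /notT]; by rewrite vT.
  case: ifP => hk /=; rewrite ?addn0 in_setU hcr orbF; split => //.
  have wT : nth u s k \notin T by apply: notT; exact: mem_nth.
  suff -> : (nth u s k |: occ st) :&: T = occ st :&: T by [].
  apply/setP => x; rewrite !(in_setI, in_setU1).
  case: eqP => [->|] //=; by rewrite (negbTE wT) !andbF.
have [K hK] := (iffLR (HT u)) hu.
have vs : v \in s.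
  apply/trajectP; exists K; [exact: depth Ht hv hK | by rewrite hK].
have hj : index v s < n by move: vs; rewrite -index_mem Hs.
have iterj : iter (index v s) par u = v by rewrite -Hnth // nth_index.
have kle : k <= size s := find_size _ _.
have key : (v \in take k s) = (index v s < k).
  case: (boolP (v \in take k s)) => h.
    apply/esym; rewrite -(cat_take_drop k s) index_cat h.
    apply: leq_trans (_ : size (take k s) <= k); first by rewrite index_mem.
    by rewrite size_takel.
  apply/esym/negbTE; rewrite -leqNgt -(cat_take_drop k s) index_cat (negbTE h).
  by rewrite size_takel // leq_addr.
case: ifP => hk /=.
  have hw := wnot hk.
  have hkn : k < n by rewrite -Hs.
  case: (leqP k (index v s)) => hkj.
    exists false; rewrite addn0 orbF.
    have wT : nth u s k \in T.
      apply/HT; exists (index v s - k); by rewrite Hnth // -iterD subnK.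
    split; last first.
      rewrite in_setU inE key ltnNge hkj /=; by rewrite orbF.
    have -> : (nth u s k |: occ st) :&: T = nth u s k |: (occ st :&: T).
      apply/setP => x; rewrite !(in_setI, in_setU1); case: eqP => [->|] //=; by rewrite wT.
    by rewrite cardsU1 inE (negbTE hw) /= add1n addn1.
  exists true.
  have wT : nth u s k \notin T.
    apply/negP => /HT [K' hK']. rewrite Hnth // -iterD in hK'.
    have : iter (K' + k - index v s) par v = v.
      have hle : index v s <= K' + k by apply: leq_trans (ltnW hkj) (leq_addl _ _).
      have e : iter (K' + k) par u = iter (K' + k - index v s) par (iter (index v s) par u).
        by rewrite -iterD subnK.
      rewrite e iterj in hK'. exact: hK'.
    move/(nocycle Ht hv). lia.
  split; last by rewrite in_setU inE key hkj hv /= orbT.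
  suff -> : (nth u s k |: occ st) :&: T = occ st :&: T by [].
  apply/setP => x; rewrite !(in_setI, in_setU1).
  case: eqP => [->|] //=; by rewrite (negbTE wT) !andbF.
exists true; split => //.
by rewrite in_setU inE key hv (leq_trans hj) ?orbT // -Hs leqNgt hk.
Qed.

Lemma fold_inv n (par : 'I_n -> 'I_n) r v l st :
  is_rooted_tree par r -> v != r ->
  exists x, #|occ (foldl (park_step par r) st l) :&: subtree par v| + x
     = #|occ st :&: subtree par v| + count (mem (subtree par v)) l
   /\ (v \in used (foldl (park_step par r) st l)) = (v \in used st) || (0 < x).
Proof.
move=> Ht hv; elim: l st => [|a l IH] st /=.
  by exists 0; rewrite !addn0 orbF.
have [b [h1 h2]] := step_inv st a Ht hv.
have [x [h3 h4]] := IH (park_step par r st a).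
exists (x + b); split.
  move: h1 h3; set A := #|_ :&: _|; set B := #|_ :&: _|. move=> e1 e2; rewrite addnA e2 -addnA [count _ _ + b]addnC addnA e1 -addnA.
by [].
rewrite h4 h2; clear h1 h2; case: b => /=; rewrite ?addn0 ?addn1 ?orbT ?orbF //.
Qed.

Lemma fold_parked n (par : 'I_n -> 'I_n) r l st :
  allparked (foldl (park_step par r) st l) ->
  allparked st /\ #|occ (foldl (park_step par r) st l)| = #|occ st| + size l.
Proof.
elim: l st => [|a l IH] st /=; first by rewrite addn0.
move=> /IH [h1 ->].
move: h1; rewrite /park_step; set s := root_path par a.
set k := find _ s; case: ifP => hk //= h1.
split => //.
have hw : nth a s k \notin occ st.
  have := @nth_find _ a (fun w => w \notin occ st) s; apply.
  by rewrite has_find.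
by rewrite cardsU1 hw add1n addSn addnS.
Qed.

Theorem corollary2p5 (n : nat) (par : 'I_n -> 'I_n) (r : 'I_n)
    (p : 'I_n -> 'I_n) :
  is_rooted_tree par r ->
  is_parking_function par r p ->
  (is_prime_pf par r p <-> all_edges_used par r p).
Proof.
move=> Ht.
rewrite /all_edges_used /is_prime_pf /is_parking_function /run_parking.
set l := [seq p i | i <- enum 'I_n].
set st0 := PState set0 set0 true.
set F := foldl _ st0 l.
move=> Hp.
have [_ Hocc] := fold_parked Hp.
rewrite cards0 size_map size_enum_ord in Hocc.
have Hfull : occ F = setT.
  apply/eqP; rewrite eqEcard subsetT cardsT card_ord /=; by rewrite /F Hocc add0n.
have key : forall v, v != r ->
    (v \in used F) = (#|subtree par v| < #|[set i | p i \in subtree par v]|).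
  move=> v hv.
  have [x [h1 h2]] := fold_inv l st0 Ht hv.
  rewrite h2 /= in_set0 /=.
  rewrite Hfull setTI set0I cards0 add0n /l count_map cnt_ord in h1.
  have -> : #|[set i | p i \in subtree par v]| = #|subtree par v| + x by apply: esym; exact: h1. by rewrite -{1}[#|subtree par v|]addn0 ltn_add2l.
split => H v hv; [by rewrite key // H | by rewrite -key // H].
Qed.
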